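(* Let $\mathcal{X}\subseteq\mathbb{R}^d$ be a nonempty closed convex bounded set with $R\ge\max_{x,y\in\mathcal{X}}\|x-y\|$, and consider the iterates $x_t,z_t$ and step sizes $\gamma_t$ of Algorithm AdaPEG (described in the context) run with arbitrary oracle answers $\widehat{F(x_t)}\in\mathbb{R}^d$. Then for all $y\in\mathcal{X}$, \[\sum_{t=1}^T\langle\widehat{F(x_t)},x_t-y\rangle\le\frac12R^2\gamma_0+\left(\frac12\frac{R^2}{\eta}+2\eta\right)\sqrt{\sum_{t=1}^T\left\|\widehat{F(x_t)}-\widehat{F(x_{t-1})}\right\|^2}-\frac12\sum_{t=1}^T\gamma_{t-1}\left(\|x_t-z_{t-1}\|^2+\|x_{t-1}-z_{t-1}\|^2\right).\]
   Context: $\|\cdot\|$ is the Euclidean norm. Algorithm AdaPEG: $x_0=z_0\in\mathcal{X}$, $\gamma_0\ge0$, $\eta>0$. For $t=1,\dots,T$: $x_t=\arg\min_{u\in\mathcal{X}}\{\langle\widehat{F(x_{t-1})},u\rangle+\tfrac12\gamma_{t-1}\|u-z_{t-1}\|^2\}$; $\gamma_t=\frac1\eta\sqrt{\eta^2\gamma_0^2+\sum_{s=1}^t\|\widehat{F(x_s)}-\widehat{F(x_{s-1})}\|^2}$; $z_t=\arg\min_{u\in\mathcal{X}}\{\langle\widehat{F(x_t)},u\rangle+\tfrac12\gamma_{t-1}\|u-z_{t-1}\|^2+\tfrac12(\gamma_t-\gamma_{t-1})\|u-x_t\|^2\}$. *)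

(* Defs.v *)
(* vectors of R^d are row vectors 'rV[R]_d over R : realType. *)
From HB Require Import structures.
From mathcomp Require Import all_boot all_order all_algebra.
From mathcomp Require Import all_classical all_reals all_analysis.
Set Implicit Arguments. Unset Strict Implicit. Unset Printing Implicit Defensive.
Import Order.TTheory GRing.Theory Num.Theory.
Import numFieldNormedType.Exports.
Local Open Scope classical_set_scope.
Local Open Scope ring_scope.

Definition dotv {R : realType} {d : nat} (u v : 'rV[R]_d) : R :=
  \sum_(i < d) u ord0 i * v ord0 i.
Definition enorm {R : realType} {d : nat} (u : 'rV[R]_d) : R :=
  Num.sqrt (dotv u u).

Definition convex_setX {R : realType} {d : nat} (X : set 'rV[R]_d) : Prop :=
  forall x y (l : R), X x -> X y -> 0 <= l -> l <= 1 ->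
    X (l *: x + (1 - l) *: y).

Definition is_argmin {R : realType} {d : nat} (X : set 'rV[R]_d)
  (f : 'rV[R]_d -> R) (x : 'rV[R]_d) : Prop :=
  X x /\ forall u, X u -> f x <= f u.

(* AdaPEG step sizes: g t is the oracle answer \widehat{F(x_t)};
   gamma_t = (1/eta) sqrt(eta^2 gamma_0^2 + sum_{s=1}^t ||g s - g (s-1)||^2).
   (For t = 0 this equals gamma_0 when gamma_0 >= 0.) *)
Definition adapeg_gamma {R : realType} {d : nat} (eta gamma0 : R)
  (g : nat -> 'rV[R]_d) (t : nat) : R :=
  if t is 0%N then gamma0 else
  eta^-1 * Num.sqrt (eta ^+ 2 * gamma0 ^+ 2
     + \sum_(1 <= s < t.+1) enorm (g s - g s.-1) ^+ 2).

Definition adapeg_run {R : realType} {d : nat} (X : set 'rV[R]_d)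
  (eta gamma0 : R) (T : nat) (g : nat -> 'rV[R]_d) (x z : nat -> 'rV[R]_d) : Prop :=
  let gam := adapeg_gamma eta gamma0 g in
  x 0%N = z 0%N /\ X (x 0%N) /\
  forall t, (1 <= t <= T)%N ->
    is_argmin X (fun u => dotv (g t.-1) u + 2^-1 * gam t.-1 * enorm (u - z t.-1) ^+ 2) (x t)
    /\ is_argmin X (fun u => dotv (g t) u + 2^-1 * gam t.-1 * enorm (u - z t.-1) ^+ 2
                           + 2^-1 * (gam t - gam t.-1) * enorm (u - x t) ^+ 2) (z t).

(* Main.v *)
Require Import Defs.
From HB Require Import structures.
From mathcomp Require Import all_boot all_order all_algebra.
From mathcomp Require Import all_classical all_reals all_analysis.
From mathcomp Require Import ring lra.
Import Order.TTheory GRing.Theory Num.Theory.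
Import numFieldNormedType.Exports.
Local Open Scope classical_set_scope.
Local Open Scope ring_scope.

Section H.
Context {R : realType} {d : nat}.
Implicit Types (u v w : 'rV[R]_d).

Lemma dotvC u v : dotv u v = dotv v u.
Proof. by rewrite /dotv; apply: eq_bigr => i _; rewrite mulrC. Qed.
Lemma dotvDl u v w : dotv (u + v) w = dotv u w + dotv v w.
Proof. by rewrite /dotv -big_split; apply: eq_bigr => i _; rewrite mxE mulrDl. Qed.
Lemma dotvZl k u w : dotv (k *: u) w = k * dotv u w.
Proof. by rewrite /dotv mulr_sumr; apply: eq_bigr => i _; rewrite mxE mulrA. Qed.
Lemma dotvNl u w : dotv (- u) w = - dotv u w.
Proof. by rewrite /dotv -sumrN; apply: eq_bigr => i _; rewrite mxE mulNr. Qed.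
Lemma dotvBl u v w : dotv (u - v) w = dotv u w - dotv v w.
Proof. by rewrite dotvDl dotvNl. Qed.
Lemma dotvDr u v w : dotv w (u + v) = dotv w u + dotv w v.
Proof. by rewrite dotvC dotvDl !(dotvC w). Qed.
Lemma dotvZr k u w : dotv w (k *: u) = k * dotv w u.
Proof. by rewrite dotvC dotvZl dotvC. Qed.
Lemma dotvBr u v w : dotv w (u - v) = dotv w u - dotv w v.
Proof. by rewrite dotvC dotvBl !(dotvC w). Qed.
Lemma dotvNr u w : dotv w (- u) = - dotv w u.
Proof. by rewrite dotvC dotvNl dotvC. Qed.
Lemma dotv0 u : dotv 0 u = 0.
Proof. by rewrite /dotv big1 // => i _; rewrite mxE mul0r. Qed.
Lemma dotv_ge0 u : 0 <= dotv u u.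
Proof. by rewrite /dotv; apply: sumr_ge0 => i _; rewrite -expr2 sqr_ge0. Qed.
Lemma enorm2 u : enorm u ^+ 2 = dotv u u.
Proof. by rewrite /enorm sqr_sqrtr // dotv_ge0. Qed.
Lemma enorm_ge0 u : 0 <= enorm u.
Proof. exact: sqrtr_ge0. Qed.
Lemma dotv_N0 u v : dotv u u = 0 -> dotv u v = 0.
Proof.
move=> H.
have P : forall i : 'I_d, true -> 0 <= u ord0 i * u ord0 i by move=> i _; rewrite -expr2 sqr_ge0.
have H' := psumr_eq0P P H.
rewrite /dotv big1 // => i _.
by have /eqP := H' i isT; rewrite mulf_eq0 orbb => /eqP ->; rewrite mul0r.
Qed.
Lemma polar m p u :
  dotv (m - p) (u - m) = 2^-1 * (dotv (u - p) (u - p) - dotv (u - m) (u - m) - dotv (m - p) (m - p)).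
Proof.
have -> : u - p = (u - m) + (m - p) by rewrite addrA subrK.
set q := u - m; set r := m - p.
rewrite (dotvDl q r) (dotvDr q r q) (dotvDr q r r) (dotvC q r). lra.
Qed.
Lemma Nexp q l v : dotv (q + l *: v) (q + l *: v) = dotv q q + 2 * l * dotv q v + l ^+ 2 * dotv v v.
Proof.
rewrite dotvDl !dotvDr !dotvZl !dotvZr (dotvC v q). lra.
Qed.
Lemma foc2 (X : set 'rV[R]_d) (f : 'rV[R]_d -> R) a p1 p2 (c1 c2 : R) m :
 convex_setX X -> 0 <= c1 -> 0 <= c2 ->
 (forall u, f u = dotv a u + 2^-1 * c1 * enorm (u - p1) ^+ 2 + 2^-1 * c2 * enorm (u - p2) ^+ 2) ->
 is_argmin X f m -> forall u, X u ->
 0 <= dotv a (u - m) + c1 * dotv (m - p1) (u - m) + c2 * dotv (m - p2) (u - m).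
Proof.
move=> cX c1p c2p fE [Xm mmin] u Xu.
set v := u - m.
set L := dotv a v + c1 * dotv (m - p1) v + c2 * dotv (m - p2) v.
set Q := 2^-1 * (c1 + c2) * dotv v v.
have Qp : 0 <= Q by rewrite /Q; apply: mulr_ge0; [apply: mulr_ge0; lra|exact: dotv_ge0].
have key : forall l, 0 < l -> l <= 1 -> 0 <= l * L + l ^+ 2 * Q.
  move=> l l0 l1; have Xw := cX u m l Xu Xm (ltW l0) l1.
  have := mmin _ Xw.
  have -> : l *: u + (1 - l) *: m = m + l *: v by rewrite /v scalerBl scale1r scalerBr addrCA.
  rewrite !fE !enorm2.
  have e1 : forall p, m + l *: v - p = (m - p) + l *: v by move=> p; rewrite addrAC.
  rewrite !e1 !Nexp (dotvDr m (l *: v) a) (dotvZr l v a) /L /Q. lra.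
  idtac.
case: (lerP 0 L) => // L0.
have QL : 0 < Q - L by lra.
pose l := - L / (Q - L).
have l0 : 0 < l by rewrite /l divr_gt0 // oppr_gt0.
have l1 : l <= 1 by rewrite /l ler_pdivrMr // mul1r; lra.
have E : l * (Q - L) = - L by rewrite /l divfK // gt_eqF.
have E2 : l * L + l ^+ 2 * Q = l ^+ 2 * L.
  have E' : l * Q = l * L - L by lra.
  by rewrite expr2 -mulrA E'; ring.
have := key l l0 l1; rewrite E2.
have : 0 < l ^+ 2 by rewrite exprn_gt0.
nra.
Qed.

Lemma step_ineq (X : set 'rV[R]_d) (a b x z zp y : 'rV[R]_d) (gp gm : R) :
 (forall u, X u -> 0 <= dotv a (u - x) + gp * dotv (x - zp) (u - x)) ->
 (forall u, X u -> 0 <= dotv b (u - z) + gp * dotv (z - zp) (u - z) + (gm - gp) * dotv (z - x) (u - z)) ->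
 X y -> X z -> X x -> 0 <= gm ->
 dotv b (x - y) <= 2^-1*gp*dotv (y-zp) (y-zp) - 2^-1*gm*dotv (y-z) (y-z)
    + 2^-1*(gm-gp)*dotv (y-x) (y-x) - 2^-1*gm*dotv (x-z) (x-z)
    - 2^-1*gp*dotv (x-zp) (x-zp) + dotv (b - a) (x - z)
 /\ gm * dotv (b-a) (x-z) <= dotv (b-a) (b-a).
Proof.
move=> HA HB Xy Xz Xx gm0.
have Nzx : dotv (z - x) (z - x) = dotv (x - z) (x - z).
  by rewrite -opprB dotvNl dotvNr opprK.
have A1 := HA z Xz; have B1 := HB y Xy.
have A2 := HA z Xz; have B2 := HB x Xx.
rewrite (polar x zp z) Nzx (dotvBr z x a) in A1 A2.
rewrite (polar z zp y) (polar z x y) Nzx (dotvBr y z b) in B1.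
rewrite (polar z zp x) (polar z x x) subrr dotv0 Nzx (dotvBr x z b) in B2.
split.
  rewrite (dotvBr x y b) (dotvBl b a (x - z)) (dotvBr x z b) (dotvBr x z a). lra.
have D : gm * dotv (x - z) (x - z) <= dotv (b - a) (x - z).
  rewrite (dotvBl b a (x - z)) (dotvBr x z b) (dotvBr x z a). nra.
have := dotv_ge0 (b - a + (- gm) *: (x - z)).
rewrite Nexp.
have := dotv_ge0 (x - z).
nra.
Qed.
End H.
Theorem lemmaB5 (R : realType) (d : nat) (X : set 'rV[R]_d) (Rd : R)
  (eta gamma0 : R) (T : nat) (g : nat -> 'rV[R]_d) (x z : nat -> 'rV[R]_d) :
  X !=set0 -> closed X -> convex_setX X -> bounded_set X ->
  (forall a b, X a -> X b -> enorm (a - b) <= Rd) ->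
  0 <= gamma0 -> 0 < eta ->
  adapeg_run X eta gamma0 T g x z ->
  forall y, X y ->
    \sum_(1 <= t < T.+1) dotv (g t) (x t - y)
    <= 2^-1 * Rd ^+ 2 * gamma0
       + (2^-1 * (Rd ^+ 2 / eta) + 2 * eta)
         * Num.sqrt (\sum_(1 <= t < T.+1) enorm (g t - g t.-1) ^+ 2)
       - 2^-1 * \sum_(1 <= t < T.+1) adapeg_gamma eta gamma0 g t.-1
             * (enorm (x t - z t.-1) ^+ 2 + enorm (x t.-1 - z t.-1) ^+ 2).
Proof.
move=> _ _ cX _ HR g0 eta0 [x0z0 [Xx0 Hrun]] y Xy.
set gam := adapeg_gamma eta gamma0 g in Hrun *.
pose S t := \sum_(1 <= s < t.+1) enorm (g s - g s.-1) ^+ 2.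
change (\sum_(1 <= t < T.+1) enorm (g t - g t.-1) ^+ 2) with (S T).
have HR2 : forall a b, X a -> X b -> dotv (a - b) (a - b) <= Rd ^+ 2.
  move=> a b Xa Xb; rewrite -enorm2.
  have := HR a b Xa Xb; have := enorm_ge0 (a - b); nra.
have S0 : S 0%N = 0 by rewrite /S big_geq.
have SS : forall t, S t.+1 = S t + dotv (g t.+1 - g t) (g t.+1 - g t).
  by move=> t; rewrite /S big_nat_recr //= enorm2.
have Sge0 : forall t, 0 <= S t.
  by move=> t; apply: sumr_ge0 => i _; exact: sqr_ge0.
have etan0 : eta != 0 by rewrite gt_eqF.
have gsq : forall t, 0 <= gam t /\ (eta * gam t) ^+ 2 = eta ^+ 2 * gamma0 ^+ 2 + S t.
  case=> [|k].
    by split => //; rewrite S0 addr0 exprMn.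
  have -> : gam k.+1 = eta^-1 * Num.sqrt (eta ^+ 2 * gamma0 ^+ 2 + S k.+1) by [].
  have c0 : 0 <= eta ^+ 2 * gamma0 ^+ 2 + S k.+1.
    by apply: addr_ge0 => //; apply: mulr_ge0; exact: sqr_ge0.
  split; first by apply: mulr_ge0; [rewrite invr_ge0; lra | exact: sqrtr_ge0].
  by rewrite mulrA mulfV // mul1r sqr_sqrtr.
have gge0 : forall t, 0 <= gam t by move=> t; case: (gsq t).
have gmono : forall t, gam t <= gam t.+1.
  move=> t; case: (gsq t) => g1 e1; case: (gsq t.+1) => g2 e2.
  have : (eta * gam t) ^+ 2 <= (eta * gam t.+1) ^+ 2.
    by rewrite e1 e2 SS; have := dotv_ge0 (g t.+1 - g t); lra.
  rewrite ler_pXn2r // ?nnegrE; last 2 first.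
    by apply: mulr_ge0 => //; lra.
    by apply: mulr_ge0 => //; lra.
  by rewrite ler_pM2l.
have gam0 : gam 0%N = gamma0 by [].
clearbody gam S.
have inv : forall n, (n <= T)%N ->
  \sum_(1 <= t < n.+1) dotv (g t) (x t - y) <=
    2^-1 * gam 0%N * dotv (y - z 0%N) (y - z 0%N) - 2^-1 * gam n * dotv (y - z n) (y - z n)
    + 2^-1 * (gam n - gam 0%N) * Rd ^+ 2 + 2 * eta ^+ 2 * (gam n - gam 0%N)
    - 2^-1 * gam n * dotv (x n - z n) (x n - z n)
    - 2^-1 * \sum_(1 <= t < n.+1) gam t.-1
             * (enorm (x t - z t.-1) ^+ 2 + enorm (x t.-1 - z t.-1) ^+ 2).
  elim=> [|n IH] hn.
    rewrite !big_geq // x0z0 !subrr dotv0; lra.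
  have IH' := IH (ltnW hn).
  rewrite big_nat_recr // [X in _ - 2^-1 * X]big_nat_recr //=.
  rewrite !enorm2.
  have [HA HB] := Hrun n.+1 (ltac:(by apply/andP; split)).
  have Xx : X (x n.+1) by case: HA.
  have Xz : X (z n.+1) by case: HB.
  have FA := @foc2 R d X _ (g n) (z n) 0 (gam n) 0 (x n.+1) cX (gge0 n) (lexx 0)
    (fun u => ltac:(by rewrite mulr0 mul0r addr0)) HA.
  have FB := @foc2 R d X _ (g n.+1) (z n) (x n.+1) (gam n) (gam n.+1 - gam n) (z n.+1) cX (gge0 n)
    (ltac:(by rewrite subr_ge0)) (fun u => erefl) HB.
  have [S1 S2] := @step_ineq R d X (g n) (g n.+1) (x n.+1) (z n.+1) (z n) y (gam n) (gam n.+1)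
    (fun u Xu => ltac:(by have := FA u Xu; rewrite mul0r addr0)) FB Xy Xz Xx (gge0 n.+1).
  set D := dotv (g n.+1 - g n) (x n.+1 - z n.+1).
  set Nd := dotv (g n.+1 - g n) (g n.+1 - g n).
  have Ndeq : Nd = eta ^+ 2 * (gam n.+1 ^+ 2 - gam n ^+ 2).
    case: (gsq n) => _ e1; case: (gsq n.+1) => _ e2.
    move: e2; rewrite SS -/Nd => e2.
    rewrite exprMn in e1 e2; lra.
  have Dle : D <= 2 * eta ^+ 2 * (gam n.+1 - gam n).
    have gm := gmono n; have g0n := gge0 n.
    case: (lerP (gam n.+1) 0) => gp.
      have e0 : gam n.+1 = 0 by apply/eqP; rewrite eq_le gp gge0.
      have e0' : gam n = 0 by apply/eqP; rewrite eq_le g0n andbT; rewrite -e0.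
      have : Nd = 0 by rewrite Ndeq e0 e0' expr0n /= subrr mulr0.
      by rewrite /Nd => /dotv_N0 H0; rewrite /D H0 e0 e0' subrr mulr0.
    rewrite -(ler_pM2l gp).
    have eta2 : 0 <= eta ^+ 2 by exact: sqr_ge0.
    have : 0 <= eta ^+ 2 * (gam n.+1 - gam n) ^+ 2 by apply: mulr_ge0 => //; exact: sqr_ge0.
    move: S2; rewrite -/D -/Nd Ndeq => S2.
    have E : gam n.+1 * (2 * eta ^+ 2 * (gam n.+1 - gam n)) = eta ^+ 2 * (gam n.+1 ^+ 2 - gam n ^+ 2) + eta ^+ 2 * (gam n.+1 - gam n) ^+ 2 by ring.
    rewrite E; lra.
  have Ry : (gam n.+1 - gam n) * dotv (y - x n.+1) (y - x n.+1) <= (gam n.+1 - gam n) * Rd ^+ 2.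
    by apply: ler_wpM2l; [rewrite subr_ge0 | exact: HR2].
  move: S1; rewrite -/D. lra.
have I := inv T (leqnn T); rewrite gam0 in I.
have Xz0 : X (z 0%N) by rewrite -x0z0.
have h0 : gamma0 * dotv (y - z 0%N) (y - z 0%N) <= gamma0 * Rd ^+ 2.
  by apply: ler_wpM2l => //; exact: HR2.
have h1 : 0 <= gam T * dotv (y - z T) (y - z T) by apply: mulr_ge0 => //; exact: dotv_ge0.
have h2 : 0 <= gam T * dotv (x T - z T) (x T - z T) by apply: mulr_ge0 => //; exact: dotv_ge0.
set s := Num.sqrt (S T).
have s0 : 0 <= s by exact: sqrtr_ge0.
have ss : s ^+ 2 = S T by rewrite sqr_sqrtr.
have hT : eta * gam T <= eta * gamma0 + s.
  case: (gsq T) => gT eT.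
  have : (eta * gam T) ^+ 2 <= (eta * gamma0 + s) ^+ 2.
    rewrite eT -ss sqrrD exprMn.
    have : 0 <= eta * gamma0 * s by apply: mulr_ge0 => //; apply: mulr_ge0 => //; lra.
    lra.
  rewrite ler_pXn2r // ?nnegrE //.
    by apply: mulr_ge0 => //; lra.
  by apply: addr_ge0 => //; apply: mulr_ge0 => //; lra.
have hw : gam T - gamma0 <= s / eta by rewrite ler_pdivlMr //; lra.
have Rd2 : 0 <= Rd ^+ 2 by exact: sqr_ge0.
have hw1 : Rd ^+ 2 * (gam T - gamma0) <= Rd ^+ 2 * (s / eta) by exact: ler_wpM2l.
have hw2 : eta * (eta * (gam T - gamma0)) <= eta * s.
  by apply: ler_wpM2l; lra.
rewrite (mulrC s) mulrA in hw1.
lra.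
Qed.
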